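(* Let $R=\prod_{i=1}^nR_i$ be a direct product of rings $R_1,\ldots,R_n$. Then $R$ is a left localizable ring if and only if each of the rings $R_1,\ldots,R_n$ is a left localizable ring.
   Context: All rings are associative with $1$. A multiplicative subset $S$ of $R$ ($1\in S$, $0\notin S$, closed under multiplication) is a left Ore set if $Sr\cap Rs\neq\emptyset$ for all $r\in R$, $s\in S$. A left Ore set $S$ is a left denominator set if $rs=0$ ($r\in R$, $s\in S$) implies $tr=0$ for some $t\in S$. A ring $R$ is a left localizable ring if every nonzero element $r\in R$ lies in some left denominator set of $R$. *)

(* Defs.v *)
From HB Require Import structures.
From mathcomp Require Import all_boot all_order all_algebra.
Set Implicit Arguments. Unset Strict Implicit. Unset Printing Implicit Defensive.
Import GRing.Theory.
Local Open Scope ring_scope.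

Section DirectProduct.
Variables (n : nat) (R : 'I_n -> pzRingType).

Definition dprod_ring := {dffun forall i : 'I_n, R i}.

HB.instance Definition _ := Choice.on dprod_ring.

Definition dp_zero : dprod_ring := [ffun i => 0].
Definition dp_opp (x : dprod_ring) : dprod_ring := [ffun i => - x i].
Definition dp_add (x y : dprod_ring) : dprod_ring := [ffun i => x i + y i].
Definition dp_one : dprod_ring := [ffun i => 1].
Definition dp_mul (x y : dprod_ring) : dprod_ring := [ffun i => x i * y i].

Lemma dp_addA : associative dp_add.
Proof. by move=> x y z; apply/ffunP=> i; rewrite !ffunE addrA. Qed.
Lemma dp_addC : commutative dp_add.
Proof. by move=> x y; apply/ffunP=> i; rewrite !ffunE addrC. Qed.
Lemma dp_add0 : left_id dp_zero dp_add.
Proof. by move=> x; apply/ffunP=> i; rewrite !ffunE add0r. Qed.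
Lemma dp_addN : left_inverse dp_zero dp_opp dp_add.
Proof. by move=> x; apply/ffunP=> i; rewrite !ffunE addNr. Qed.

HB.instance Definition _ :=
  GRing.isZmodule.Build dprod_ring dp_addA dp_addC dp_add0 dp_addN.

Lemma dp_mulA : associative dp_mul.
Proof. by move=> x y z; apply/ffunP=> i; rewrite !ffunE mulrA. Qed.
Lemma dp_mul1 : left_id dp_one dp_mul.
Proof. by move=> x; apply/ffunP=> i; rewrite !ffunE mul1r. Qed.
Lemma dp_mulr1 : right_id dp_one dp_mul.
Proof. by move=> x; apply/ffunP=> i; rewrite !ffunE mulr1. Qed.
Lemma dp_mulDl : left_distributive dp_mul +%R.
Proof. by move=> x y z; apply/ffunP=> i; rewrite !ffunE mulrDl. Qed.
Lemma dp_mulDr : right_distributive dp_mul +%R.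
Proof. by move=> x y z; apply/ffunP=> i; rewrite !ffunE mulrDr. Qed.

HB.instance Definition _ :=
  GRing.Zmodule_isPzRing.Build dprod_ring dp_mulA dp_mul1 dp_mulr1 dp_mulDl dp_mulDr.

End DirectProduct.

Section Localizable.
Variable R : pzRingType.

Definition multiplicative_subset (S : R -> Prop) : Prop :=
  [/\ S 1, ~ S 0 & forall a b, S a -> S b -> S (a * b)].

Definition left_Ore_set (S : R -> Prop) : Prop :=
  multiplicative_subset S /\
  forall (r s : R), S s -> exists (s' r' : R), S s' /\ s' * r = r' * s.

Definition left_denominator_set (S : R -> Prop) : Prop :=
  left_Ore_set S /\
  forall (r s : R), S s -> r * s = 0 -> exists t : R, S t /\ t * r = 0.

Definition left_localizable : Prop :=
  forall r : R, r != 0 -> exists S : R -> Prop, left_denominator_set S /\ S r.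

End Localizable.

(* Main.v *)
Require Import Defs.
From HB Require Import structures.
From mathcomp Require Import all_boot all_order all_algebra.
Set Implicit Arguments. Unset Strict Implicit. Unset Printing Implicit Defensive.
Import GRing.Theory.
Local Open Scope ring_scope.

Section Aux.
Variables (n : nat) (R : 'I_n -> pzRingType).

Lemma dpmulE (x y : dprod_ring R) i : (x * y) i = x i * y i.
Proof. exact: ffunE. Qed.
Lemma dp0E i : (0 : dprod_ring R) i = 0.
Proof. exact: ffunE. Qed.
Lemma dp1E i : (1 : dprod_ring R) i = 1.
Proof. exact: ffunE. Qed.

Lemma inj_ex i (a : R i) :
  exists x : dprod_ring R, x i = a /\ forall k, k != i -> x k = 0.
Proof.
pose f (k : 'I_n) : R k :=
  match i =P k with ReflectT e => eq_rect i R a k e | ReflectF _ => 0 end.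
exists [ffun k => f k]; split.
  rewrite ffunE /f; case: (i =P i) => [e|//].
  by rewrite (eq_irrelevance e (erefl i)).
move=> k hk; rewrite ffunE /f; case: (i =P k) => [e|//].
by rewrite e eqxx in hk.
Qed.

Lemma dp_eq0 (x : dprod_ring R) : x != 0 -> exists i, x i != 0.
Proof.
move=> hx; apply/existsP; apply: contraNT hx => /existsPn h.
apply/eqP/ffunP => i; rewrite [RHS]dp0E; exact/eqP/negPn/h.
Qed.
End Aux.

Theorem theorem3p1 (n : nat) (R : 'I_n -> pzRingType) :
  left_localizable (dprod_ring R) <-> (forall i : 'I_n, left_localizable (R i)).
Proof.
split.
- move=> HL i ri ri0.
  have [r [rii rk]] := inj_ex ri.
  have r0 : r != 0.
    by apply: contra ri0 => /eqP e; rewrite -rii e dp0E.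
  have [S [[[[S1 S0 SM] Ore] Den] Sr]] := HL r r0.
  exists (fun a => exists2 s, S s & s i = a); split; last by exists r.
  split; [split; [split|]|].
  + by exists 1 => //; rewrite dp1E.
  + case=> s Ss si0.
    have rs0 : r * s = 0.
      apply/ffunP => k; rewrite dpmulE [RHS]dp0E.
      case: (eqVneq k i) => [->|hk]; first by rewrite si0 mulr0.
      by rewrite rk // mul0r.
    have [t [St tr]] := Den _ _ Ss rs0.
    by apply: S0; rewrite -tr; apply: SM.
  + move=> a b [s Ss <-] [s' Ss' <-]; exists (s * s'); first exact: SM.
    by rewrite dpmulE.
  + move=> a b [s Ss <-].
    have [A [Ai Ak]] := inj_ex a.
    have [s' [r' [Ss' e]]] := Ore A s Ss.
    exists (s' i), (r' i); split; first by exists s'.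
    by rewrite -Ai -!dpmulE e.
  + move=> a b [s Ss <-] h.
    have [A [Ai Ak]] := inj_ex a.
    have As : A * s = 0.
      apply/ffunP => k; rewrite dpmulE [RHS]dp0E.
      case: (eqVneq k i) => [->|hk]; first by rewrite Ai.
      by rewrite Ak // mul0r.
    have [t [St tA]] := Den _ _ Ss As.
    exists (t i); split; first by exists t.
    by rewrite -Ai -dpmulE tA dp0E.
- move=> HL r r0.
  have [j rj] := dp_eq0 r0.
  have [Sj [[[[S1 S0 SM] Ore] Den] Sr]] := HL j (r j) rj.
  exists (fun s : dprod_ring R => Sj (s j)); split => //.
  split; [split; [split|]|].
  + by rewrite dp1E.
  + by rewrite dp0E.
  + by move=> a b ha hb; rewrite dpmulE; apply: SM.
  + move=> a s Ss.
    have [s'j [r'j [Ss' e]]] := Ore (a j) (s j) Ss.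
    have [s' [s'i s'k]] := inj_ex s'j.
    have [r' [r'i r'k]] := inj_ex r'j.
    exists s', r'; split; first by rewrite s'i.
    apply/ffunP => k; rewrite !dpmulE.
    case: (eqVneq k j) => [->|hk]; first by rewrite s'i r'i.
    by rewrite s'k // r'k // !mul0r.
  + move=> a s Ss h.
    have h' : a j * s j = 0 by rewrite -dpmulE h dp0E.
    have [tj [St tA]] := Den _ _ Ss h'.
    have [t [ti tk]] := inj_ex tj.
    exists t; split; first by rewrite ti.
    apply/ffunP => k; rewrite dpmulE [RHS]dp0E.
    case: (eqVneq k j) => [->|hk]; first by rewrite ti.
    by rewrite tk // mul0r.
Qed.
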